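(* Let $A$ be a self-adjoint operator in a separable Hilbert space $\mathfrak H$, let $U=(A+iI)(A-iI)^{-1}$ be its Cayley transform, and let $\mathcal L\neq\{0\}$ be a closed subspace of $\mathfrak H$. Let $$S_{\mathcal L}=A\upharpoonright_{\mathcal D(S_{\mathcal L})},\qquad \mathcal D(S_{\mathcal L})=\{u\in\mathcal D(A):((A-iI)u,\gamma)=0\ \ \forall\gamma\in\mathcal L\}.$$ Then the following are equivalent: (i) $S_{\mathcal L}$ is a Phillips symmetric operator (in particular, densely defined); (ii) $\mathcal L$ is a wandering subspace of $U$, i.e. $U^n\mathcal L\perp\mathcal L$ for all $n\in\mathbb N$.
   Context: A closed densely defined symmetric operator $S$ with equal nonzero defect numbers is a Phillips symmetric operator (PSO) if its characteristic function is constant on $\mathbb C_+$; here, given a boundary triplet $(\mathcal H,\Gamma_-,\Gamma_+)$ of $S^*$ (i.e. $\Gamma_\pm:\mathcal D(S^* )\to\mathcal H$ linear, $(S^*f,g)-(f,S^*g)=i[(\Gamma_+f,\Gamma_+g)-(\Gamma_-f,\Gamma_-g)]$, $(\Gamma_-,\Gamma_+)$ surjective onto $\mathcal H\oplus\mathcal H$), the characteristic function $\Theta(\lambda)$, $\lambda\in\mathbb C_+$, is the bounded operator in $\mathcal H$ with $\mathcal D(S)\dotplus\ker(S^*-\lambda I)=\{f\in\mathcal D(S^* ):\Theta(\lambda)\Gamma_+f=\Gamma_-f\}$. Equivalently (and usable as the definition here), $S$ is a PSO iff $\ker(S^*-\lambda I)\perp\ker(S^*-\nu I)$ for all $\lambda\in\mathbb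 C_+,\nu\in\mathbb C_-$. *)

(* Defs.v *)
From Stdlib Require Import Reals.
Open Scope R_scope.

Record C := mkC { Re : R ; Im : R }.
Definition C0 : C := mkC 0 0.
Definition C1 : C := mkC 1 0.
Definition Ci : C := mkC 0 1.
Definition Cadd (a b : C) : C := mkC (Re a + Re b) (Im a + Im b).
Definition Cmul (a b : C) : C :=
  mkC (Re a * Re b - Im a * Im b) (Re a * Im b + Im a * Re b).
Definition Copp (a : C) : C := mkC (- Re a) (- Im a).
Definition Cconj (a : C) : C := mkC (Re a) (- Im a).

Record HOps := {
  car :> Type ;
  hzero : car ;
  hadd : car -> car -> car ;
  hopp : car -> car ;
  hscal : C -> car -> car ;
  inner : car -> car -> C   (* linear in the first argument *)
}.

Section HDefs.
Variable H : HOps.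

Definition hsub (x y : H) : H := hadd H x (hopp H y).
Definition hnorm (x : H) : R := sqrt (Re (inner H x x)).

Definition converges (u : nat -> H) (l : H) : Prop :=
  Un_cv (fun n => hnorm (hsub (u n) l)) 0.
Definition cauchy (u : nat -> H) : Prop :=
  forall eps, 0 < eps -> exists N, forall n m, (N <= n)%nat -> (N <= m)%nat ->
    hnorm (hsub (u n) (u m)) < eps.

Definition dense (P : H -> Prop) : Prop :=
  forall x eps, 0 < eps -> exists y, P y /\ hnorm (hsub x y) < eps.
Definition linear_subspace (P : H -> Prop) : Prop :=
  P (hzero H) /\ (forall x y, P x -> P y -> P (hadd H x y)) /\
  (forall a x, P x -> P (hscal H a x)).
Definition closed_subset (P : H -> Prop) : Prop :=
  forall u l, (forall n, P (u n)) -> converges u l -> P l.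
Definition orth (P Q : H -> Prop) : Prop :=
  forall x y, P x -> Q y -> inner H x y = C0.

Definition is_hilbert : Prop :=
  (forall x y z, hadd H x (hadd H y z) = hadd H (hadd H x y) z) /\
  (forall x y, hadd H x y = hadd H y x) /\
  (forall x, hadd H x (hzero H) = x) /\
  (forall x, hadd H x (hopp H x) = hzero H) /\
  (forall a b x, hscal H a (hscal H b x) = hscal H (Cmul a b) x) /\
  (forall x, hscal H C1 x = x) /\
  (forall a x y, hscal H a (hadd H x y) = hadd H (hscal H a x) (hscal H a y)) /\
  (forall a b x, hscal H (Cadd a b) x = hadd H (hscal H a x) (hscal H b x)) /\
  (forall x y z, inner H (hadd H x y) z = Cadd (inner H x z) (inner H y z)) /\
  (forall a x y, inner H (hscal H a x) y = Cmul a (inner H x y)) /\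
  (forall x y, inner H y x = Cconj (inner H x y)) /\
  (forall x, 0 <= Re (inner H x x)) /\
  (forall x, inner H x x = C0 -> x = hzero H) /\
  (forall u, cauchy u -> exists l, converges u l) /\
  (exists d : nat -> H, dense (fun x => exists n, x = d n)).

Record Op := { dom : H -> Prop ; app : H -> H }.

Definition linear_op (T : Op) : Prop :=
  linear_subspace (dom T) /\
  (forall x y, dom T x -> dom T y -> app T (hadd H x y) = hadd H (app T x) (app T y)) /\
  (forall a x, dom T x -> app T (hscal H a x) = hscal H a (app T x)).
Definition densely_defined (T : Op) : Prop := dense (dom T).
Definition symmetric (T : Op) : Prop :=
  forall x y, dom T x -> dom T y -> inner H (app T x) y = inner H x (app T y).
Definition closed_op (T : Op) : Prop :=
  forall u x y, (forall n, dom T (u n)) -> converges u x ->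
    converges (fun n => app T (u n)) y -> dom T x /\ app T x = y.

(* graph of the adjoint:  adj_rel T y z  <->  y in dom(adj T) and (adj T) y = z
   (meaningful for densely defined T) *)
Definition adj_rel (T : Op) (y z : H) : Prop :=
  forall x, dom T x -> inner H (app T x) y = inner H x z.

Definition self_adjoint (A : Op) : Prop :=
  linear_op A /\ densely_defined A /\
  forall y z, adj_rel A y z <-> (dom A y /\ z = app A y).

(* U is the Cayley transform (A + iI)(A - iI)^{-1} of A; for self-adjoint A,
   A - iI maps D(A) bijectively onto H, so this determines U : H -> H. *)
Definition is_cayley (A : Op) (U : H -> H) : Prop :=
  forall u, dom A u ->
    U (hsub (app A u) (hscal H Ci u)) = hadd H (app A u) (hscal H Ci u).

Definition defect (T : Op) (lam : C) (y : H) : Prop := adj_rel T y (hscal H lam y).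

(* equal nonzero defect numbers: ker(adj T - iI) is nonzero and has the same
   Hilbert dimension as ker(adj T + iI), i.e. they are unitarily isomorphic *)
Definition equal_nonzero_defects (T : Op) : Prop :=
  (exists y, defect T Ci y /\ y <> hzero H) /\
  exists V : H -> H,
    (forall x, defect T Ci x -> defect T (Copp Ci) (V x)) /\
    (forall x y, defect T Ci x -> defect T Ci y -> inner H (V x) (V y) = inner H x y) /\
    (forall y, defect T (Copp Ci) y -> exists x, defect T Ci x /\ V x = y).

Definition is_PSO (S : Op) : Prop :=
  linear_op S /\ densely_defined S /\ symmetric S /\ closed_op S /\
  equal_nonzero_defects S /\
  forall lam nu, 0 < Im lam -> Im nu < 0 -> orth (defect S lam) (defect S nu).

Definition S_L (A : Op) (L : H -> Prop) : Op :=
  {| dom := fun u => dom A u /\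
        forall g, L g -> inner H (hsub (app A u) (hscal H Ci u)) g = C0 ;
     app := app A |}.

Definition wandering (U : H -> H) (L : H -> Prop) : Prop :=
  forall n : nat, (1 <= n)%nat ->
    orth (fun x => exists y, L y /\ x = Nat.iter n U y) L.

End HDefs.

Record Hilbert := { hops :> HOps ; hilbert_ax : is_hilbert hops }.

(* Main.v *)
Require Import Defs.
From Stdlib Require Import Reals Lra Lia Psatz ClassicalEpsilon ZArith Classical.
Import Defs.
Open Scope R_scope.

Lemma Ceq_intro (a b : C) : Re a = Re b -> Im a = Im b -> a = b.
Proof. destruct a, b; simpl; intros; subst; reflexivity. Qed.

Ltac csimpl := cbn [Re Im Cadd Cmul Copp Cconj C0 C1 Ci] in *.
Ltac ceq := apply Ceq_intro; csimpl; ring.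

Definition cmod2 (c : C) : R := Re c * Re c + Im c * Im c.
Definition cmod (c : C) : R := sqrt (cmod2 c).

Lemma cmod2_ge0 c : 0 <= cmod2 c.
Proof. unfold cmod2; nra. Qed.

Lemma cmod2_mul a b : cmod2 (Cmul a b) = cmod2 a * cmod2 b.
Proof. unfold cmod2; csimpl; ring. Qed.

Lemma cmod2_0 c : cmod2 c = 0 -> c = C0.
Proof. unfold cmod2; intros h; apply Ceq_intro; csimpl; nra. Qed.

Lemma cmod_ge0 c : 0 <= cmod c.
Proof. apply sqrt_pos. Qed.

Lemma cmod_0 c : cmod c = 0 -> c = C0.
Proof. unfold cmod; intros h; apply cmod2_0; apply sqrt_eq_0; auto; apply cmod2_ge0. Qed.

Lemma cmod_sq c : cmod c * cmod c = cmod2 c.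
Proof. unfold cmod; apply sqrt_sqrt, cmod2_ge0. Qed.

Lemma cmod_mul a b : cmod (Cmul a b) = cmod a * cmod b.
Proof. unfold cmod; rewrite cmod2_mul; apply sqrt_mult; apply cmod2_ge0. Qed.

Lemma cmod_le_of_sq (c : C) (r : R) : 0 <= r -> cmod2 c <= r * r -> cmod c <= r.
Proof.
  intros h1 h2. pose proof (cmod_ge0 c). pose proof (cmod_sq c). nra.
Qed.

Lemma cmod_add a b : cmod (Cadd a b) <= cmod a + cmod b.
Proof.
  apply cmod_le_of_sq. pose proof (cmod_ge0 a); pose proof (cmod_ge0 b); lra.
  pose proof (cmod_sq a); pose proof (cmod_sq b); pose proof (cmod_ge0 a); pose proof (cmod_ge0 b).
  unfold cmod2 in *; csimpl.
  assert (Re a * Re b + Im a * Im b <= cmod a * cmod b).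
  { pose proof (sqrt_cauchy (Re a) (Im a) (Re b) (Im b)). unfold cmod, cmod2 in *.
    unfold Rsqr in *. lra. }
  nra.
Qed.

Lemma cmod_opp a : cmod (Copp a) = cmod a.
Proof. unfold cmod, cmod2; csimpl; f_equal; ring. Qed.

Lemma cmod_conj a : cmod (Cconj a) = cmod a.
Proof. unfold cmod, cmod2; csimpl; f_equal; ring. Qed.

Lemma cmod_real r : cmod (mkC r 0) = Rabs r.
Proof. unfold cmod, cmod2; csimpl. replace (r*r+0*0) with (r*r) by ring. 
  rewrite <- sqrt_Rsqr_abs. reflexivity. Qed.

Lemma cmod_small_0 c : (forall eps, 0 < eps -> cmod c < eps) -> c = C0.
Proof.
  intros h. apply cmod_0. pose proof (cmod_ge0 c).
  destruct (Rle_lt_or_eq_dec 0 (cmod c) H) as [hl|he]; auto.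
  specialize (h _ hl). lra.
Qed.

Lemma decay (a : nat -> R) (r B : R) :
  0 <= r < 1 -> (forall k, 0 <= a k) -> (forall k, a k <= B) ->
  (forall k, a k = r * a (S k)) -> a 0%nat = 0.
Proof.
  intros hr ha hb hrec.
  assert (hm : forall m, a 0%nat = r ^ m * a m).
  { induction m. simpl; ring. rewrite IHm, hrec. simpl; ring. }
  pose proof (ha 0%nat) as h0.
  destruct (Rle_lt_or_eq_dec 0 (a 0%nat) h0) as [hl|he]; auto.
  exfalso.
  assert (hB : 0 < B) by (pose proof (hb 0%nat); lra).
  destruct (pow_lt_1_zero r ltac:(rewrite Rabs_right; lra) (a 0%nat / B) ltac:(apply Rdiv_lt_0_compat; lra)) as [N hN].
  specialize (hN N (le_n _)). rewrite Rabs_right in hN by (apply Rle_ge, pow_le; lra).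
  rewrite (hm N) in hl, hN.
  pose proof (hb N). pose proof (ha N). pose proof (pow_le r N ltac:(lra)).
  apply (Rmult_lt_compat_r B) in hN; auto.
  unfold Rdiv in hN. rewrite Rmult_assoc, Rinv_l in hN by lra. nra.
Qed.

Lemma cdecay (e : nat -> C) (c d : C) (B : R) :
  cmod2 d < cmod2 c -> (forall k, cmod2 (e k) <= B) ->
  (forall k, Cmul c (e k) = Cmul d (e (S k))) -> e 0%nat = C0.
Proof.
  intros hcd hb hrec. apply cmod2_0.
  pose proof (cmod2_ge0 d).
  apply (decay (fun k => cmod2 (e k)) (cmod2 d / cmod2 c) B).
  - split. apply Rmult_le_pos; auto. left; apply Rinv_0_lt_compat; lra.
    apply (Rmult_lt_reg_r (cmod2 c)); [lra|]. unfold Rdiv. rewrite Rmult_assoc, Rinv_l; lra.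
  - intros; apply cmod2_ge0.
  - auto.
  - intros k. pose proof (f_equal cmod2 (hrec k)) as h. rewrite !cmod2_mul in h.
    field_simplify; [|lra]. rewrite <- h. field. lra.
Qed.
Section Hil.
Variable H : HOps.
Hypothesis HH : is_hilbert H.

Notation hadd := (hadd H).
Notation hopp := (hopp H).
Notation hscal := (hscal H).
Notation ip := (inner H).
Notation hzero := (hzero H).

Lemma add_assoc x y z : hadd x (hadd y z) = hadd (hadd x y) z.
Proof. destruct HH as (h&_); auto. Qed.
Lemma add_comm x y : hadd x y = hadd y x.
Proof. destruct HH as (_&h&_); auto. Qed.
Lemma add_0 x : hadd x hzero = x.
Proof. destruct HH as (_&_&h&_); auto. Qed.
Lemma add_opp x : hadd x (hopp x) = hzero.
Proof. destruct HH as (_&_&_&h&_); auto. Qed.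
Lemma ip_addl x y z : ip (hadd x y) z = Cadd (ip x z) (ip y z).
Proof. destruct HH as (_&_&_&_&_&_&_&_&h&_); auto. Qed.
Lemma ip_scall a x y : ip (hscal a x) y = Cmul a (ip x y).
Proof. destruct HH as (_&_&_&_&_&_&_&_&_&h&_); auto. Qed.
Lemma ip_sym x y : ip y x = Cconj (ip x y).
Proof. destruct HH as (_&_&_&_&_&_&_&_&_&_&h&_); auto. Qed.
Lemma ip_pos x : 0 <= Re (ip x x).
Proof. destruct HH as (_&_&_&_&_&_&_&_&_&_&_&h&_); auto. Qed.
Lemma ip_def x : ip x x = C0 -> x = hzero.
Proof. destruct HH as (_&_&_&_&_&_&_&_&_&_&_&_&h&_); auto. Qed.
Lemma complete u : cauchy H u -> exists l, converges H u l.
Proof. destruct HH as (_&_&_&_&_&_&_&_&_&_&_&_&_&h&_); auto. Qed.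

Lemma add_0l x : hadd hzero x = x.
Proof. rewrite add_comm; apply add_0. Qed.
Lemma add_oppl x : hadd (hopp x) x = hzero.
Proof. rewrite add_comm; apply add_opp. Qed.

Lemma ip_addr x y z : ip x (hadd y z) = Cadd (ip x y) (ip x z).
Proof. rewrite (ip_sym (hadd y z)), ip_addl, (ip_sym x y), (ip_sym x z). ceq. Qed.
Lemma ip_scalr a x y : ip x (hscal a y) = Cmul (Cconj a) (ip x y).
Proof. rewrite (ip_sym (hscal a y)), ip_scall, (ip_sym x y). ceq. Qed.

Lemma c_self_0 (c : C) : c = Cadd c c -> c = C0.
Proof. intros h; apply Ceq_intro; pose proof (f_equal Re h); pose proof (f_equal Im h); csimpl; lra. Qed.

Lemma ip_0l y : ip hzero y = C0.
Proof. apply c_self_0. rewrite <- ip_addl, add_0. reflexivity. Qed.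
Lemma ip_0r y : ip y hzero = C0.
Proof. rewrite ip_sym, ip_0l. ceq. Qed.
Lemma ip_oppl x y : ip (hopp x) y = Copp (ip x y).
Proof.
  assert (h : Cadd (ip x y) (ip (hopp x) y) = C0) by (rewrite <- ip_addl, add_opp; apply ip_0l).
  apply Ceq_intro; pose proof (f_equal Re h); pose proof (f_equal Im h); csimpl; lra.
Qed.
Lemma ip_oppr x y : ip x (hopp y) = Copp (ip x y).
Proof. rewrite ip_sym, ip_oppl, (ip_sym y x). ceq. Qed.

Ltac expand := unfold hsub in *; repeat (rewrite ?ip_addl, ?ip_addr, ?ip_scall, ?ip_scalr,
   ?ip_oppl, ?ip_oppr, ?ip_0l, ?ip_0r).

Ltac expand_in h := unfold hsub in h; repeat (rewrite ?ip_addl, ?ip_addr, ?ip_scall, ?ip_scalr,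
   ?ip_oppl, ?ip_oppr, ?ip_0l, ?ip_0r in h).

Lemma sub_0_eq x y : hadd x (hopp y) = hzero -> x = y.
Proof.
  intros h. rewrite <- (add_0 x), <- (add_oppl y), add_assoc, h, add_0l. reflexivity.
Qed.

Lemma veq x y : ip (hsub H x y) (hsub H x y) = C0 -> x = y.
Proof. intros h. apply sub_0_eq, ip_def, h. Qed.

Ltac veq := apply veq; expand; ceq.

Definition N (x : H) : R := Re (ip x x).

Lemma N_ge0 x : 0 <= N x.
Proof. apply ip_pos. Qed.
Lemma Im_ip_self x : Im (ip x x) = 0.
Proof. pose proof (f_equal Im (ip_sym x x)). csimpl. lra. Qed.
Lemma ip_self x : ip x x = mkC (N x) 0.
Proof. apply Ceq_intro; csimpl. reflexivity. apply Im_ip_self. Qed.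
Lemma N_0 x : N x = 0 -> x = hzero.
Proof. intros h; apply ip_def; rewrite ip_self, h; reflexivity. Qed.

Lemma CS x y : cmod2 (ip x y) <= N x * N y.
Proof.
  destruct (Rle_lt_or_eq_dec 0 (N y) (N_ge0 y)) as [hy|hy].
  - pose proof (N_ge0 (hsub H (hscal (mkC (N y) 0) x) (hscal (ip x y) y))) as h.
    unfold N at 1 in h. expand_in h.
    rewrite (ip_sym x y), (ip_self y), (ip_self x) in h. unfold cmod2.
    csimpl. unfold N in *.
    set (p1 := Re (ip x y)) in *. set (p2 := Im (ip x y)) in *.
    set (a := Re (ip y y)) in *. set (b := Re (ip x x)) in *.
    assert (0 <= a * (a * b - (p1*p1+p2*p2))) by nra.
    apply Rmult_le_reg_l with a; [lra|]. nra.
  - symmetry in hy. apply N_0 in hy. subst y. rewrite ip_0r. unfold cmod2; csimpl.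
    pose proof (N_ge0 x). unfold N at 2. rewrite ip_0l. csimpl. nra.
Qed.

Definition hn (x : H) := hnorm H x.
Lemma hn_ge0 x : 0 <= hnorm H x.
Proof. apply sqrt_pos. Qed.
Lemma hn_sq x : hnorm H x * hnorm H x = N x.
Proof. apply sqrt_sqrt, N_ge0. Qed.

Lemma CS' x y : cmod (ip x y) <= hnorm H x * hnorm H y.
Proof.
  apply cmod_le_of_sq. apply Rmult_le_pos; apply hn_ge0.
  pose proof (hn_sq x); pose proof (hn_sq y). pose proof (CS x y). nra.
Qed.

Lemma Re_le_cmod c : Re c <= cmod c.
Proof. unfold cmod. apply Rsqr_incr_0_var. unfold Rsqr. rewrite sqrt_sqrt by apply cmod2_ge0.
  unfold cmod2; nra. apply sqrt_pos. Qed.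

Lemma hn_le_of_sq x r : 0 <= r -> N x <= r * r -> hnorm H x <= r.
Proof. intros h1 h2. pose proof (hn_sq x). pose proof (hn_ge0 x). nra. Qed.

Lemma hn_add x y : hnorm H (hadd x y) <= hnorm H x + hnorm H y.
Proof.
  apply hn_le_of_sq. pose proof (hn_ge0 x); pose proof (hn_ge0 y); lra.
  pose proof (hn_sq x); pose proof (hn_sq y). pose proof (CS' x y).
  pose proof (Re_le_cmod (ip x y)).
  unfold N at 1. expand. rewrite (ip_sym x y). csimpl. unfold N in *. nra.
Qed.

Lemma N_scal a x : N (hscal a x) = cmod2 a * N x.
Proof. unfold N. expand. rewrite ip_self. unfold cmod2; csimpl. ring. Qed.

Lemma hn_scal a x : hnorm H (hscal a x) = cmod a * hnorm H x.
Proof. unfold hnorm, cmod. fold (N (hscal a x)) (N x). rewrite N_scal. apply sqrt_mult. apply cmod2_ge0. apply N_ge0. Qed.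

Lemma N_opp x : N (hopp x) = N x.
Proof. unfold N; expand. csimpl. f_equal; ring. Qed.

Lemma hn_sub_sym x y : hnorm H (hsub H x y) = hnorm H (hsub H y x).
Proof. unfold hnorm. f_equal. fold (N (hsub H x y)) (N (hsub H y x)). unfold N; expand; csimpl; ring. Qed.

Lemma hn_tri x y z : hnorm H (hsub H x z) <= hnorm H (hsub H x y) + hnorm H (hsub H y z).
Proof.
  replace (hsub H x z) with (hadd (hsub H x y) (hsub H y z)) by veq. apply hn_add.
Qed.

Lemma N_hn x : N x = 0 <-> hnorm H x = 0.
Proof. split; intros h. unfold hnorm; fold (N x). rewrite h; apply sqrt_0.
  rewrite <- hn_sq, h; ring. Qed.


Lemma conv_iff u l : converges H u l <->
  forall eps, 0 < eps -> exists n0, forall n, (n0 <= n)%nat -> hnorm H (hsub H (u n) l) < eps.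
Proof.
  unfold converges, Un_cv, R_dist. split; intros h eps he; destruct (h eps he) as [n0 hn0];
  exists n0; intros n hn; specialize (hn0 n hn); pose proof (hn_ge0 (hsub H (u n) l));
  rewrite Rminus_0_r, Rabs_right in *; lra.
Qed.

Lemma conv_cauchy u l : converges H u l -> cauchy H u.
Proof.
  rewrite conv_iff. intros h eps he. destruct (h (eps/2)) as [n0 hn0]; [lra|].
  exists n0. intros n m hn hm. pose proof (hn0 n hn); pose proof (hn0 m hm).
  pose proof (hn_tri (u n) l (u m)). rewrite (hn_sub_sym l (u m)) in H2. lra.
Qed.

Definition climit (c : nat -> C) (a : C) :=
  forall eps, 0 < eps -> exists n0, forall n, (n0 <= n)%nat -> cmod (Cadd (c n) (Copp a)) < eps.

Lemma climit_ipl u x g : converges H u x -> climit (fun n => ip (u n) g) (ip x g).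
Proof.
  rewrite conv_iff. intros h eps he.
  destruct (h (eps / (hnorm H g + 1))) as [n0 hn0].
  { apply Rdiv_lt_0_compat; pose proof (hn_ge0 g); lra. }
  exists n0; intros n hn. specialize (hn0 n hn).
  replace (Cadd (ip (u n) g) (Copp (ip x g))) with (ip (hsub H (u n) x) g) by (expand; ceq).
  eapply Rle_lt_trans. apply CS'.
  pose proof (hn_ge0 g). pose proof (hn_ge0 (hsub H (u n) x)).
  apply Rmult_lt_compat_r with (r := hnorm H g + 1) in hn0; [|lra].
  unfold Rdiv in hn0. rewrite Rmult_assoc, Rinv_l in hn0 by lra. nra.
Qed.

Lemma climit_ipr u x g : converges H u x -> climit (fun n => ip g (u n)) (ip g x).
Proof.
  intros h eps he. destruct (climit_ipl u x g h eps he) as [n0 hn0]. exists n0.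
  intros n hn. specialize (hn0 n hn). rewrite (ip_sym (u n)), (ip_sym x).
  replace (Cadd (Cconj (ip (u n) g)) (Copp (Cconj (ip x g)))) with
    (Cconj (Cadd (ip (u n) g) (Copp (ip x g)))) by ceq. rewrite cmod_conj. auto.
Qed.

Lemma climit_add c d a b : climit c a -> climit d b -> climit (fun n => Cadd (c n) (d n)) (Cadd a b).
Proof.
  intros h1 h2 eps he. destruct (h1 (eps/2)) as [n1 H1]; [lra|]. destruct (h2 (eps/2)) as [n2 H2]; [lra|].
  exists (max n1 n2). intros n hn. specialize (H1 n ltac:(lia)). specialize (H2 n ltac:(lia)).
  replace (Cadd (Cadd (c n) (d n)) (Copp (Cadd a b))) with (Cadd (Cadd (c n) (Copp a)) (Cadd (d n) (Copp b))) by ceq.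
  pose proof (cmod_add (Cadd (c n) (Copp a)) (Cadd (d n) (Copp b))). lra.
Qed.

Lemma climit_mul k c a : climit c a -> climit (fun n => Cmul k (c n)) (Cmul k a).
Proof.
  intros h eps he. destruct (h (eps / (cmod k + 1))) as [n0 hn0].
  { apply Rdiv_lt_0_compat; pose proof (cmod_ge0 k); lra. }
  exists n0; intros n hn. specialize (hn0 n hn).
  replace (Cadd (Cmul k (c n)) (Copp (Cmul k a))) with (Cmul k (Cadd (c n) (Copp a))) by ceq.
  rewrite cmod_mul. pose proof (cmod_ge0 k). pose proof (cmod_ge0 (Cadd (c n) (Copp a))).
  apply Rmult_lt_compat_r with (r := cmod k + 1) in hn0; [|lra].
  unfold Rdiv in hn0. rewrite Rmult_assoc, Rinv_l in hn0 by lra. nra.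
Qed.

Lemma climit_ext c d a : (forall n, c n = d n) -> climit c a -> climit d a.
Proof. intros e h eps he. destruct (h eps he) as [n0 hn0]. exists n0. intros n hn. rewrite <- e. auto. Qed.

Lemma climit_unique c a b : climit c a -> climit c b -> a = b.
Proof.
  intros h1 h2.
  assert (Cadd a (Copp b) = C0).
  { apply cmod_small_0. intros eps he.
    destruct (h1 (eps/2)) as [n1 H1]; [lra|]. destruct (h2 (eps/2)) as [n2 H2]; [lra|].
    specialize (H1 (max n1 n2) ltac:(lia)). specialize (H2 (max n1 n2) ltac:(lia)).
    replace (Cadd a (Copp b)) with (Cadd (Copp (Cadd (c (max n1 n2)) (Copp a))) (Cadd (c (max n1 n2)) (Copp b))) by ceq.
    pose proof (cmod_add (Copp (Cadd (c (max n1 n2)) (Copp a))) (Cadd (c (max n1 n2)) (Copp b))).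
    rewrite cmod_opp in H0. lra. }
  apply Ceq_intro; pose proof (f_equal Re H0); pose proof (f_equal Im H0); csimpl; lra.
Qed.

Lemma climit_const a : climit (fun _ => a) a.
Proof. intros eps he. exists 0%nat. intros. unfold cmod, cmod2; csimpl.
  match goal with |- sqrt ?e < _ => replace e with 0 by ring end. rewrite sqrt_0; auto. Qed.

Lemma inv_small d : 0 < d -> exists K, forall n, (K <= n)%nat -> / (INR n + 1) < d.
Proof.
  intros hd. destruct (archimed (/ d)) as [h1 _].
  assert (0 <= up (/d))%Z. { apply le_IZR. pose proof (Rinv_0_lt_compat d hd). lra. }
  exists (Z.to_nat (up (/ d))). intros n hn.
  assert (INR (Z.to_nat (up (/d))) <= INR n) by (apply le_INR; auto).
  rewrite INR_IZR_INZ, Z2Nat.id in H1 by auto.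
  assert (/ d < INR n + 1) by lra.
  assert (h : / (INR n + 1) < / / d).
  { apply Rinv_lt_contravar; auto. pose proof (pos_INR n). apply Rmult_lt_0_compat. apply Rinv_0_lt_compat; auto. lra. }
  rewrite Rinv_inv in h. auto.
Qed.

Lemma le_eps a b : (forall eta, 0 < eta -> a <= b + eta) -> a <= b.
Proof. intros h. destruct (Rle_lt_dec a b); auto. specialize (h ((a - b)/2)). lra. Qed.

Lemma var_lemma R c : 0 <= c -> (forall t, 2 * t * R <= t * t * c) -> R = 0.
Proof.
  intros hc h. set (t := R / (c + 1)). assert (ht : R = t * (c + 1)) by (unfold t; field; lra).
  specialize (h t). rewrite ht in h |- *. assert (h2 : t * t * (c + 2) <= 0) by nra.
  assert (h3 : t = 0) by nra. rewrite h3; ring.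
Qed.

Lemma var_id x l y t : N (hsub H x (hadd l (hscal (mkC t 0) y))) =
  N (hsub H x l) - 2 * t * Re (ip (hsub H x l) y) + t * t * N y.
Proof. unfold N. expand. rewrite (ip_sym x y), (ip_sym l y). csimpl. ring. Qed.

Lemma parallelogram x a b : N (hsub H a b) =
  2 * N (hsub H x a) + 2 * N (hsub H x b) - 4 * N (hsub H x (hscal (mkC (/2) 0) (hadd a b))).
Proof. unfold N. expand. csimpl. field. Qed.

Lemma hn_lt_of_N x eps : 0 < eps -> N x < eps * eps -> hnorm H x < eps.
Proof. intros h1 h2. pose proof (hn_sq x). pose proof (hn_ge0 x). nra. Qed.

Lemma projection (M : H -> Prop) : linear_subspace H M -> closed_subset H M ->
  forall x, exists m, M m /\ forall y, M y -> ip (hsub H x m) y = C0.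
Proof.
  intros (hM0 & hMadd & hMsc) hMc x.
  set (E := fun r => exists m, M m /\ r = - N (hsub H x m)).
  destruct (completeness E) as [s [hs1 hs2]].
  { exists 0. intros r [m [_ ->]]. pose proof (N_ge0 (hsub H x m)). lra. }
  { exists (- N (hsub H x hzero)), hzero. auto. }
  set (d := - s).
  assert (hd1 : forall m, M m -> d <= N (hsub H x m)).
  { intros m hm. assert (E (- N (hsub H x m))) by (exists m; auto). specialize (hs1 _ H0). unfold d; lra. }
  assert (hd0 : 0 <= d).
  { assert (s <= 0). apply hs2. intros r [m [_ ->]]. pose proof (N_ge0 (hsub H x m)). lra. unfold d; lra. }
  assert (hd2 : forall eps, 0 < eps -> exists m, M m /\ N (hsub H x m) < d + eps).
  { intros eps he. destruct (classic (exists m, M m /\ N (hsub H x m) < d + eps)) as [h|h]; auto.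
    exfalso. assert (s <= s - eps). apply hs2. intros r [m [hm ->]].
    destruct (Rlt_le_dec (N (hsub H x m)) (d + eps)). exfalso; apply h; exists m; auto.
    unfold d in *; lra. lra. }
  assert (hseq : forall n : nat, exists m, M m /\ N (hsub H x m) < d + / (INR n + 1)).
  { intros n. apply hd2. apply Rinv_0_lt_compat. pose proof (pos_INR n); lra. }
  set (mm := fun n => proj1_sig (constructive_indefinite_description _ (hseq n))).
  assert (hmm : forall n, M (mm n) /\ N (hsub H x (mm n)) < d + / (INR n + 1)).
  { intros n. unfold mm. destruct (constructive_indefinite_description _ (hseq n)); auto. }
  assert (hpar : forall n k, N (hsub H (mm n) (mm k)) < 2 * / (INR n + 1) + 2 * / (INR k + 1)).
  { intros n k. rewrite (parallelogram x).
    assert (M (hscal (mkC (/2) 0) (hadd (mm n) (mm k)))).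
    { apply hMsc. apply hMadd; apply hmm. }
    apply hd1 in H0. pose proof (proj2 (hmm n)). pose proof (proj2 (hmm k)). lra. }
  assert (hcau : cauchy H mm).
  { intros eps he. destruct (inv_small (eps * eps / 4)) as [K hK].
    { apply Rdiv_lt_0_compat; nra. }
    exists K. intros n m hn hm. apply hn_lt_of_N; auto. specialize (hpar n m).
    pose proof (hK n hn). pose proof (hK m hm). lra. }
  destruct (complete mm hcau) as [l hl].
  assert (hMl : M l) by (apply (hMc mm); auto; intros; apply hmm).
  assert (hNl : N (hsub H x l) <= d).
  { apply le_eps. intros eta heta.
    rewrite conv_iff in hl.
    destruct (hl (Rmin 1 (eta / (2 * (2 * d + 5))))) as [K1 hK1].
    { apply Rmin_pos. lra. apply Rdiv_lt_0_compat; lra. }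
    destruct (inv_small (Rmin 1 (eta / 2))) as [K2 hK2]. { apply Rmin_pos; lra. }
    set (n := max K1 K2).
    specialize (hK1 n ltac:(unfold n; lia)). specialize (hK2 n ltac:(unfold n; lia)).
    pose proof (Rmin_l 1 (eta / (2 * (2 * d + 5)))). pose proof (Rmin_r 1 (eta / (2 * (2 * d + 5)))).
    pose proof (Rmin_l 1 (eta / 2)). pose proof (Rmin_r 1 (eta / 2)).
    pose proof (hn_tri x (mm n) l) as htri.
    set (q := hnorm H (hsub H x (mm n))) in *. set (t := hnorm H (hsub H (mm n) l)) in *.
    pose proof (proj2 (hmm n)) as hq. rewrite <- (hn_sq (hsub H x (mm n))) in hq. fold q in hq.
    pose proof (hn_ge0 (hsub H x (mm n))). fold q in H4. pose proof (hn_ge0 (hsub H (mm n) l)). fold t in H5.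
    pose proof (hn_ge0 (hsub H x l)).
    rewrite <- hn_sq.
    assert (hq2 : q < d + 2) by nra.
    assert (ht : t * (2 * d + 5) <= eta / 2).
    { apply Rle_trans with (eta / (2 * (2 * d + 5)) * (2 * d + 5)). apply Rmult_le_compat_r; lra.
      right; field; lra. }
    assert (hnx : hnorm H (hsub H x l) * hnorm H (hsub H x l) <= (q + t) * (q + t)) by nra.
    nra. }
  exists l. split; auto. intros y hy.
  assert (hR : forall y, M y -> Re (ip (hsub H x l) y) = 0).
  { intros y0 hy0. apply (var_lemma _ (N y0)). apply N_ge0. intros t.
    pose proof (hd1 (hadd l (hscal (mkC t 0) y0)) ltac:(apply hMadd; auto)).
    rewrite var_id in H0. lra. }
  apply Ceq_intro. apply hR; auto.
  pose proof (hR (hscal Ci y) ltac:(apply hMsc; auto)). expand. csimpl. expand_in H0. csimpl. lra.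
Qed.


Lemma scal_C0 x : hscal C0 x = hzero.
Proof. veq. Qed.
Lemma opp_scal x : hopp x = hscal (Copp C1) x.
Proof. veq. Qed.

Section OpA.
Variable A : Op H.
Hypothesis HA : self_adjoint H A.
Notation Ap := (app H A).
Notation DA := (dom H A).

Lemma dom_0 : DA hzero.
Proof. destruct HA as ((h&_)&_); apply h. Qed.
Lemma dom_add x y : DA x -> DA y -> DA (hadd x y).
Proof. destruct HA as ((h&_)&_); apply h. Qed.
Lemma dom_scal a x : DA x -> DA (hscal a x).
Proof. destruct HA as ((h&_)&_); apply h. Qed.
Lemma A_add x y : DA x -> DA y -> Ap (hadd x y) = hadd (Ap x) (Ap y).
Proof. destruct HA as ((_&h&_)&_); apply h. Qed.
Lemma A_scal a x : DA x -> Ap (hscal a x) = hscal a (Ap x).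
Proof. destruct HA as ((_&_&h)&_); apply h. Qed.
Lemma A_adj y z : adj_rel H A y z -> DA y /\ z = Ap y.
Proof. destruct HA as (_&_&h); apply h. Qed.
Lemma A_sym x y : DA x -> DA y -> ip (Ap x) y = ip x (Ap y).
Proof. intros hx hy. destruct HA as (_&_&h). apply (proj2 (h y (Ap y)) (conj hy eq_refl)). auto.
Qed.
Lemma dom_opp x : DA x -> DA (hopp x).
Proof. intros; rewrite opp_scal; apply dom_scal; auto. Qed.
Lemma dom_sub x y : DA x -> DA y -> DA (hsub H x y).
Proof. intros; apply dom_add; auto; apply dom_opp; auto. Qed.
Lemma A_0 : Ap hzero = hzero.
Proof. transitivity (Ap (hscal C0 hzero)). f_equal; symmetry; apply scal_C0.
  rewrite A_scal by apply dom_0. apply scal_C0. Qed.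
Lemma A_opp x : DA x -> Ap (hopp x) = hopp (Ap x).
Proof. intros; rewrite !opp_scal, A_scal; auto. Qed.
Lemma A_sub x y : DA x -> DA y -> Ap (hsub H x y) = hsub H (Ap x) (Ap y).
Proof. intros; unfold hsub; rewrite A_add, A_opp; auto; apply dom_opp; auto. Qed.
Lemma Im_A x : DA x -> Im (ip (Ap x) x) = 0.
Proof. intros hx. pose proof (A_sym x x hx hx). rewrite (ip_sym (Ap x) x) in H0.
  pose proof (f_equal Im H0). csimpl. lra. Qed.

Lemma A_closed u x y : (forall n, DA (u n)) -> converges H u x ->
  converges H (fun n => Ap (u n)) y -> DA x /\ Ap x = y.
Proof.
  intros hd hu hAu.
  assert (adj_rel H A x y).
  { intros v hv. apply (climit_unique (fun n => ip (Ap v) (u n))).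
    apply climit_ipr; auto.
    apply (climit_ext (fun n => ip v (Ap (u n)))). intros; rewrite A_sym; auto.
    apply climit_ipr; auto. }
  destruct (A_adj _ _ H0); auto.
Qed.

Lemma N_Ab w b : DA w -> b * b * N w <= N (hsub H (Ap w) (hscal (mkC 0 b) w)).
Proof.
  intros hw. pose proof (N_ge0 (Ap w)). pose proof (Im_A w hw). pose proof (A_sym w w hw hw).
  unfold N in *. expand. rewrite (ip_sym (Ap w) w). csimpl. nra.
Qed.

Lemma surj b : b <> 0 -> forall h, exists u, DA u /\ hsub H (Ap u) (hscal (mkC 0 b) u) = h.
Proof.
  intros hb.
  set (M := fun y => exists u, DA u /\ y = hsub H (Ap u) (hscal (mkC 0 b) u)).
  assert (hlin : linear_subspace H M).
  { split; [|split].
    - exists hzero. split. apply dom_0. rewrite A_0. veq.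
    - intros y1 y2 [u1 [h1 ->]] [u2 [h2 ->]]. exists (hadd u1 u2). split. apply dom_add; auto.
      rewrite A_add; auto. veq.
    - intros a y1 [u1 [h1 ->]]. exists (hscal a u1). split. apply dom_scal; auto.
      rewrite A_scal; auto. veq. }
  assert (hcl : closed_subset H M).
  { intros yy y hyy hconv.
    assert (hu : forall n, exists u, DA u /\ yy n = hsub H (Ap u) (hscal (mkC 0 b) u)) by apply hyy.
    set (uu := fun n => proj1_sig (constructive_indefinite_description _ (hu n))).
    assert (huu : forall n, DA (uu n) /\ yy n = hsub H (Ap (uu n)) (hscal (mkC 0 b) (uu n))).
    { intros n. unfold uu. destruct (constructive_indefinite_description _ (hu n)); auto. }
    assert (hcau : cauchy H uu).
    { intros eps he. destruct (conv_cauchy _ _ hconv (eps * Rabs b)) as [n0 hn0].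
      { apply Rmult_lt_0_compat; auto. apply Rabs_pos_lt; auto. }
      exists n0. intros n m hn hm. specialize (hn0 n m hn hm).
      replace (hsub H (yy n) (yy m)) with
        (hsub H (Ap (hsub H (uu n) (uu m))) (hscal (mkC 0 b) (hsub H (uu n) (uu m)))) in hn0.
      2:{ rewrite A_sub by apply huu. rewrite (proj2 (huu n)), (proj2 (huu m)). veq. }
      pose proof (N_Ab (hsub H (uu n) (uu m)) b ltac:(apply dom_sub; apply huu)).
      rewrite <- !hn_sq in H0.
      pose proof (hn_ge0 (hsub H (uu n) (uu m))).
      pose proof (hn_ge0 (hsub H (Ap (hsub H (uu n) (uu m))) (hscal (mkC 0 b) (hsub H (uu n) (uu m))))).
      pose proof (Rabs_pos_lt b hb).
      assert (e : b * b = Rabs b * Rabs b) by (rewrite <- Rabs_mult, Rabs_right; nra).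
      rewrite e in H0.
      assert (Rabs b * hnorm H (hsub H (uu n) (uu m)) < eps * Rabs b) by nra.
      nra. }
    destruct (complete uu hcau) as [l hl].
    assert (hadj : adj_rel H A l (hadd y (hscal (mkC 0 b) l))).
    { intros v hv. apply (climit_unique (fun n => ip (Ap v) (uu n))).
      apply climit_ipr; auto.
      apply (climit_ext (fun n => Cadd (ip v (yy n)) (Cmul (Cconj (mkC 0 b)) (ip v (uu n))))).
      { intros n. rewrite A_sym by (auto; apply huu).
        replace (Ap (uu n)) with (hadd (yy n) (hscal (mkC 0 b) (uu n))).
        expand; reflexivity. rewrite (proj2 (huu n)). veq. }
      replace (ip v (hadd y (hscal (mkC 0 b) l))) with (Cadd (ip v y) (Cmul (Cconj (mkC 0 b)) (ip v l))) by (expand; reflexivity).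
      apply climit_add. apply climit_ipr; auto. apply climit_mul. apply climit_ipr; auto. }
    destruct (A_adj _ _ hadj) as [hdl hAl]. exists l. split; auto. rewrite <- hAl. veq. }
  intros h. destruct (projection M hlin hcl h) as [m [hm horth]].
  set (k := hsub H h m).
  assert (hadj : adj_rel H A k (hscal (mkC 0 (- b)) k)).
  { intros v hv. pose proof (horth (hsub H (Ap v) (hscal (mkC 0 b) v)) ltac:(exists v; auto)).
    fold k in H0. rewrite ip_sym in H0. expand_in H0. expand.
    apply Ceq_intro; pose proof (f_equal Re H0); pose proof (f_equal Im H0); csimpl; lra. }
  destruct (A_adj _ _ hadj) as [hdk hAk].
  pose proof (Im_A k hdk). rewrite <- hAk in H0. expand_in H0. rewrite ip_self in H0. csimpl.
  assert (N k = 0) by nra.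
  apply N_0 in H1. destruct hm as [u [hu ->]]. exists u. split; auto.
  symmetry. apply sub_0_eq. exact H1.
Qed.


Lemma surjm h : exists u, DA u /\ hsub H (Ap u) (hscal Ci u) = h.
Proof. apply (surj 1). lra. Qed.
Lemma surjp h : exists u, DA u /\ hadd (Ap u) (hscal Ci u) = h.
Proof. destruct (surj (-1) ltac:(lra) h) as [u [hu e]]. exists u; split; auto. rewrite <- e. veq. Qed.

Section Cay.
Variable U : H -> H.
Hypothesis HU : is_cayley H A U.

Lemma Ucay u : DA u -> U (hsub H (Ap u) (hscal Ci u)) = hadd (Ap u) (hscal Ci u).
Proof. apply HU. Qed.

Lemma U_add p q : U (hadd p q) = hadd (U p) (U q).
Proof.
  destruct (surjm p) as [u [hu <-]]. destruct (surjm q) as [v [hv <-]].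
  replace (hadd (hsub H (Ap u) (hscal Ci u)) (hsub H (Ap v) (hscal Ci v))) with
    (hsub H (Ap (hadd u v)) (hscal Ci (hadd u v))) by (rewrite A_add; auto; veq).
  rewrite !Ucay; auto. rewrite A_add; auto. veq. apply dom_add; auto.
Qed.

Lemma U_scal a p : U (hscal a p) = hscal a (U p).
Proof.
  destruct (surjm p) as [u [hu <-]].
  replace (hscal a (hsub H (Ap u) (hscal Ci u))) with
    (hsub H (Ap (hscal a u)) (hscal Ci (hscal a u))) by (rewrite A_scal; auto; veq).
  rewrite !Ucay; auto. rewrite A_scal; auto. veq. apply dom_scal; auto.
Qed.

Lemma U_opp p : U (hopp p) = hopp (U p).
Proof. rewrite !opp_scal. apply U_scal. Qed.
Lemma U_sub p q : U (hsub H p q) = hsub H (U p) (U q).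
Proof. unfold hsub. rewrite U_add, U_opp. auto. Qed.

Lemma U_ip p q : ip (U p) (U q) = ip p q.
Proof.
  destruct (surjm p) as [u [hu <-]]. destruct (surjm q) as [v [hv <-]].
  rewrite !Ucay; auto. expand. rewrite (A_sym u v hu hv). ceq.
Qed.

Lemma U_N p : N (U p) = N p.
Proof. unfold N; rewrite U_ip; auto. Qed.

Lemma U_surj y : exists p, U p = y.
Proof. destruct (surjp y) as [u [hu <-]]. exists (hsub H (Ap u) (hscal Ci u)). apply Ucay; auto. Qed.

Lemma U_inj p q : U p = U q -> p = q.
Proof. intros e. apply veq. rewrite <- U_ip, U_sub, e. expand. ceq. Qed.

Notation Ui n := (Nat.iter n U).

Lemma Ui_add n p q : Ui n (hadd p q) = hadd (Ui n p) (Ui n q).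
Proof. induction n; simpl; auto. rewrite IHn, U_add; auto. Qed.
Lemma Ui_scal n a p : Ui n (hscal a p) = hscal a (Ui n p).
Proof. induction n; simpl; auto. rewrite IHn, U_scal; auto. Qed.
Lemma Ui_sub n p q : Ui n (hsub H p q) = hsub H (Ui n p) (Ui n q).
Proof. induction n; simpl; auto. rewrite IHn, U_sub; auto. Qed.
Lemma Ui_ip n p q : ip (Ui n p) (Ui n q) = ip p q.
Proof. induction n; simpl; auto. rewrite U_ip; auto. Qed.
Lemma Ui_N n p : N (Ui n p) = N p.
Proof. unfold N; rewrite Ui_ip; auto. Qed.

Definition Uinv (y : H) : H := proj1_sig (constructive_indefinite_description _ (U_surj y)).
Lemma Uinv_spec y : U (Uinv y) = y.
Proof. unfold Uinv. destruct (constructive_indefinite_description _ (U_surj y)); auto. Qed.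
End Cay.

Section Main.
Variable L : H -> Prop.
Hypothesis HL1 : linear_subspace H L.
Hypothesis HL2 : closed_subset H L.
Notation SL := (S_L H A L).

Lemma perp_perp y : (forall f, (forall g, L g -> ip f g = C0) -> ip f y = C0) -> L y.
Proof.
  intros h. destruct (projection L HL1 HL2 y) as [p [hp horth]].
  assert (e : hsub H y p = hzero).
  { apply ip_def. specialize (h _ horth). specialize (horth p hp).
    replace (ip (hsub H y p) (hsub H y p)) with (Cadd (ip (hsub H y p) y) (Copp (ip (hsub H y p) p)))
      by (expand; ceq).
    rewrite h, horth. ceq. }
  apply sub_0_eq in e. subst; auto.
Qed.

Lemma domS x : dom H SL x <-> DA x /\ forall g, L g -> ip (hsub H (Ap x) (hscal Ci x)) g = C0.
Proof. simpl. tauto. Qed.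
Lemma appS x : app H SL x = Ap x.
Proof. reflexivity. Qed.

Lemma dom_of f x : DA x -> hsub H (Ap x) (hscal Ci x) = f -> (forall g, L g -> ip f g = C0) -> dom H SL x.
Proof. intros hx e hf. apply domS. split; auto. rewrite e; auto. Qed.

Lemma def_mi g : L g -> defect H SL (Copp Ci) g.
Proof.
  intros hg x hx. apply domS in hx. destruct hx as [hx hp]. specialize (hp g hg).
  rewrite appS. expand. expand_in hp.
  apply Ceq_intro; pose proof (f_equal Re hp); pose proof (f_equal Im hp); csimpl; lra.
Qed.

Lemma def_mi_L y : defect H SL (Copp Ci) y -> L y.
Proof.
  intros hy. apply perp_perp. intros f hf. destruct (surjm f) as [x [hx e]].
  specialize (hy x (dom_of f x hx e hf)). rewrite appS in hy. rewrite <- e. expand. expand_in hy.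
  apply Ceq_intro; pose proof (f_equal Re hy); pose proof (f_equal Im hy); csimpl; lra.
Qed.

Section CayL.
Variable U : H -> H.
Hypothesis HU : is_cayley H A U.

Lemma def_i_U g : L g -> defect H SL Ci (U g).
Proof.
  intros hg x hx. apply domS in hx. destruct hx as [hx hp]. specialize (hp g hg).
  rewrite <- (U_ip U HU), Ucay in hp; auto.
  rewrite appS. expand. expand_in hp.
  apply Ceq_intro; pose proof (f_equal Re hp); pose proof (f_equal Im hp); csimpl; lra.
Qed.

Lemma def_i_L y : defect H SL Ci y -> L (Uinv U HU y).
Proof.
  intros hy. apply perp_perp. intros f hf. destruct (surjm f) as [x [hx e]].
  specialize (hy x (dom_of f x hx e hf)). rewrite appS in hy.
  rewrite <- (U_ip U HU), Uinv_spec, <- e, Ucay; auto. expand. expand_in hy.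
  apply Ceq_intro; pose proof (f_equal Re hy); pose proof (f_equal Im hy); csimpl; lra.
Qed.

Lemma eq_defects : (exists g, L g /\ g <> hzero) -> equal_nonzero_defects H SL.
Proof.
  intros [g [hg hg0]]. split.
  - exists (U g). split. apply def_i_U; auto. intros e. apply hg0. apply N_0.
    rewrite <- (U_N U HU), e. unfold N. rewrite ip_0l. reflexivity.
  - exists (Uinv U HU). split; [|split].
    + intros x hx. apply def_mi. apply def_i_L; auto.
    + intros x y _ _. rewrite <- (U_ip U HU), !Uinv_spec. auto.
    + intros y hy. apply def_mi_L in hy. exists (U y). split. apply def_i_U; auto.
      apply (U_inj U HU). rewrite Uinv_spec. auto.
Qed.


Notation Ui n := (Nat.iter n U).

Lemma dom_S_0 : dom H SL hzero.
Proof. apply domS. split. apply dom_0. intros g hg. rewrite A_0. expand. ceq. Qed.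

Lemma linS : linear_op H SL.
Proof.
  split; [split; [|split]|split].
  - apply dom_S_0.
  - intros x y hx hy. apply domS in hx; apply domS in hy. destruct hx as [hx px]; destruct hy as [hy py].
    apply domS. split. apply dom_add; auto. intros g hg.
    rewrite A_add by auto.
    replace (ip (hsub H (hadd (Ap x) (Ap y)) (hscal Ci (hadd x y))) g) with
      (Cadd (ip (hsub H (Ap x) (hscal Ci x)) g) (ip (hsub H (Ap y) (hscal Ci y)) g)) by (expand; ceq).
    rewrite px, py by auto. ceq.
  - intros a x hx. apply domS in hx. destruct hx as [hx px].
    apply domS. split. apply dom_scal; auto. intros g hg.
    rewrite A_scal by auto.
    replace (ip (hsub H (hscal a (Ap x)) (hscal Ci (hscal a x))) g) with
      (Cmul a (ip (hsub H (Ap x) (hscal Ci x)) g)) by (expand; ceq).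
    rewrite px by auto. ceq.
  - intros x y hx hy. apply domS in hx; apply domS in hy. destruct hx, hy. simpl. 
    apply A_add; auto.
  - intros a x hx. apply domS in hx. destruct hx. simpl. apply A_scal; auto.
Qed.

Lemma symS : symmetric H SL.
Proof. intros x y hx hy. apply domS in hx; apply domS in hy. destruct hx, hy. simpl. apply A_sym; auto. Qed.

Lemma closedS : closed_op H SL.
Proof.
  intros u x y hu hc hAc.
  assert (hu' : forall n, DA (u n)) by (intros n; apply domS, hu).
  destruct (A_closed u x y hu' hc hAc) as [hx hAx].
  split; [|simpl; auto].
  apply domS. split; auto. intros g hg.
  apply (climit_unique (fun n => Cadd (ip (Ap (u n)) g) (Cmul (Copp Ci) (ip (u n) g)))).
  - replace (ip (hsub H (Ap x) (hscal Ci x)) g) with (Cadd (ip y g) (Cmul (Copp Ci) (ip x g)))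
      by (rewrite hAx; expand; ceq).
    apply climit_add. apply (climit_ipl (fun n => Ap (u n))); auto.
    apply climit_mul. apply climit_ipl; auto.
  - apply (climit_ext (fun _ => C0)).
    { intros n. destruct (proj1 (domS (u n)) (hu n)) as [_ h]. rewrite <- (h g hg). expand. ceq. }
    apply climit_const.
Qed.

Section Wand.
Hypothesis HW : wandering H U L.

Lemma wperp m g g' : (1 <= m)%nat -> L g -> L g' -> ip (Ui m g) g' = C0.
Proof. intros hm hg hg'. apply (HW m hm (Ui m g) g'); eauto. Qed.

Lemma step_rel nu z m g : defect H SL nu z -> (1 <= m)%nat -> L g ->
  Cmul (Cadd (Cconj nu) Ci) (ip (Ui m g) z) = Cmul (Cadd (Cconj nu) (Copp Ci)) (ip (Ui (S m) g) z).
Proof.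
  intros hz hm hg. destruct (surjm (Ui m g)) as [x [hx e]].
  assert (hxS : dom H SL x) by (apply (dom_of (Ui m g)); auto; intros; apply wperp; auto).
  specialize (hz x hxS). rewrite appS in hz.
  assert (e2 : Ui (S m) g = hadd (Ap x) (hscal Ci x)) by (simpl; rewrite <- e; apply Ucay; auto).
  rewrite e2, <- e. expand. expand_in hz. rewrite hz. ceq.
Qed.

Lemma wz nu z k g : Im nu < 0 -> defect H SL nu z -> (1 <= k)%nat -> L g -> ip (Ui k g) z = C0.
Proof.
  intros hnu hz hk hg.
  pose proof (cdecay (fun j => ip (Ui (k + j) g) z) (Cadd (Cconj nu) Ci) (Cadd (Cconj nu) (Copp Ci)) (N g * N z)) as h.
  simpl in h. rewrite Nat.add_0_r in h. apply h.
  - unfold cmod2; csimpl. nra.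
  - intros j. eapply Rle_trans. apply CS. rewrite Ui_N; auto. right; reflexivity.
  - intros j. replace (k + S j)%nat with (S (k + j)) by lia. apply step_rel; auto. lia.
Qed.

Definition zseq z j := Nat.iter j (Uinv U HU) z.

Lemma zseq_spec z j : Ui j (zseq z j) = z.
Proof. induction j. reflexivity. unfold zseq in *. rewrite Nat.iter_succ_r, Nat.iter_succ, Uinv_spec.
  exact IHj. Qed.

Lemma zseq_N z j : N (zseq z j) = N z.
Proof. rewrite <- (Ui_N U HU j), zseq_spec. auto. Qed.

Lemma zseq_perp nu z j : Im nu < 0 -> defect H SL nu z -> (1 <= j)%nat -> forall g, L g -> ip (zseq z j) g = C0.
Proof.
  intros hnu hz hj g hg. rewrite <- (Ui_ip U HU j), zseq_spec, ip_sym, (wz nu); auto. ceq.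
Qed.

Lemma step2_rel nu z lam y j : Im nu < 0 -> defect H SL nu z -> defect H SL lam y ->
  Cmul (Cadd (Cconj lam) (Copp Ci)) (ip (zseq z j) y) = Cmul (Cadd (Cconj lam) Ci) (ip (zseq z (S j)) y).
Proof.
  intros hnu hz hy. destruct (surjm (zseq z (S j))) as [x [hx e]].
  assert (hxS : dom H SL x) by (apply (dom_of (zseq z (S j))); auto; intros; apply (zseq_perp nu); auto; lia).
  specialize (hy x hxS). rewrite appS in hy.
  assert (e2 : zseq z j = hadd (Ap x) (hscal Ci x)).
  { rewrite <- (Ucay U HU) by auto. rewrite e. unfold zseq. simpl. rewrite Uinv_spec. auto. }
  rewrite e2, <- e. expand. expand_in hy. rewrite hy. ceq.
Qed.

Lemma orthS lam nu : 0 < Im lam -> Im nu < 0 -> orth H (defect H SL lam) (defect H SL nu).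
Proof.
  intros hl hn y z hy hz.
  pose proof (cdecay (fun j => ip (zseq z j) y) (Cadd (Cconj lam) (Copp Ci)) (Cadd (Cconj lam) Ci) (N z * N y)) as h.
  simpl in h. assert (ip z y = C0). apply h.
  - unfold cmod2; csimpl. nra.
  - intros j. eapply Rle_trans. apply CS. rewrite zseq_N; auto. right; reflexivity.
  - intros j. apply (step2_rel nu); auto.
  - rewrite ip_sym, H0. ceq.
Qed.

Fixpoint ssum (u : H) (n : nat) : H :=
  match n with O => hzero | S n => hadd (ssum u n) (Ui n u) end.

Lemma ssum_perp u n m : L u -> (n <= m)%nat -> ip (ssum u n) (Ui m u) = C0.
Proof.
  intros hu. induction n; intros hnm; simpl. apply ip_0l.
  rewrite ip_addl, IHn by lia.
  replace m with (n + (m - n))%nat by lia. rewrite Nat.iter_add, (Ui_ip U HU n).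
  rewrite ip_sym, wperp by (auto; lia). ceq.
Qed.


Lemma N_add x y : N (hadd x y) = N x + N y + 2 * Re (ip x y).
Proof. unfold N. expand. rewrite (ip_sym x y). csimpl. ring. Qed.

Lemma N_sub_le a b : N (hsub H a b) <= 2 * N a + 2 * N b.
Proof.
  pose proof (N_ge0 (hadd a b)).
  assert (N (hsub H a b) + N (hadd a b) = 2 * N a + 2 * N b) by (unfold N; expand; csimpl; ring).
  lra.
Qed.

Lemma ssum_N u n : L u -> N (ssum u n) = INR n * N u.
Proof.
  intros hu. induction n. simpl. unfold N; rewrite ip_0l; simpl; ring.
  simpl ssum. rewrite N_add, IHn, ssum_perp, (Ui_N U HU) by auto. rewrite S_INR. simpl. ring.
Qed.

Lemma ssum_tel u w n : hsub H (U w) w = hscal (mkC 0 2) u ->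
  hscal (mkC 0 2) (ssum u n) = hsub H (Ui n w) w.
Proof.
  intros e. induction n. simpl. veq.
  simpl ssum. rewrite Nat.iter_succ_r.
  assert (e' : U w = hadd w (hsub H (U w) w)) by veq. rewrite e in e'.
  rewrite e', (Ui_add U HU), (Ui_scal U HU).
  assert (e'' : Ui n w = hadd (hscal (mkC 0 2) (ssum u n)) w) by (rewrite IHn; veq).
  rewrite e''. veq.
Qed.

Lemma dens_core h : (forall x, dom H SL x -> ip x h = C0) -> h = hzero.
Proof.
  intros Hh. destruct (surjp h) as [u [hu eh]].
  assert (hLu : L u).
  { apply perp_perp. intros f hf. destruct (surjm f) as [x [hx e]].
    specialize (Hh x (dom_of f x hx e hf)). rewrite <- eh in Hh. rewrite <- e. expand. expand_in Hh.
    rewrite <- (A_sym x u hx hu) in Hh.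
    apply Ceq_intro; pose proof (f_equal Re Hh); pose proof (f_equal Im Hh); csimpl; lra. }
  set (w := hsub H (Ap u) (hscal Ci u)).
  assert (e : hsub H (U w) w = hscal (mkC 0 2) u) by (unfold w; rewrite (Ucay U HU u hu); veq).
  assert (hb : forall n, INR n * N u <= N w).
  { intros n. pose proof (ssum_tel u w n e) as t. pose proof (f_equal N t) as t2.
    rewrite N_scal, ssum_N in t2 by auto. pose proof (N_sub_le (Ui n w) w). rewrite (Ui_N U HU) in H0.
    unfold cmod2 in t2; csimpl. lra. }
  assert (hu0 : N u = 0).
  { pose proof (N_ge0 u). destruct (Rle_lt_or_eq_dec 0 (N u) H0) as [hp|hz]; auto. exfalso.
    pose proof (N_ge0 w).
    destruct (inv_small (N u / (N w + 1))) as [K hK]. apply Rdiv_lt_0_compat; lra.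
    specialize (hK K (le_n _)). pose proof (hb (S K)). rewrite S_INR in H2. pose proof (pos_INR K).
    apply (Rmult_lt_compat_r (INR K + 1)) in hK; [|lra]. rewrite Rinv_l in hK by lra.
    unfold Rdiv in hK. apply (Rmult_lt_compat_r (N w + 1)) in hK; [|lra].
    replace (N u * / (N w + 1) * (INR K + 1) * (N w + 1)) with (N u * (INR K + 1)) in hK by (field; lra).
    nra. }
  apply N_0 in hu0. subst u. rewrite <- eh, A_0. veq.
Qed.

Lemma hn_self x : hnorm H (hsub H x x) < 1 -> True.
Proof. auto. Qed.

Lemma hn_zero x : hnorm H (hsub H x x) = 0.
Proof. apply N_hn. unfold N. expand. csimpl. ring. Qed.

Lemma denseS : densely_defined H SL.
Proof.
  set (Cl := fun x => forall eps, 0 < eps -> exists y, dom H SL y /\ hnorm H (hsub H x y) < eps).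
  destruct linS as [[hd0 [hdadd hdsc]] _].
  assert (hsubC : forall x, dom H SL x -> Cl x).
  { intros x hx eps he. exists x. split; auto. rewrite hn_zero. auto. }
  assert (hlin : linear_subspace H Cl).
  { split; [|split].
    - apply hsubC; auto.
    - intros x1 x2 h1 h2 eps he. destruct (h1 (eps/2)) as [y1 [hy1 n1]]; [lra|].
      destruct (h2 (eps/2)) as [y2 [hy2 n2]]; [lra|]. exists (hadd y1 y2). split; auto.
      replace (hsub H (hadd x1 x2) (hadd y1 y2)) with (hadd (hsub H x1 y1) (hsub H x2 y2)) by veq.
      pose proof (hn_add (hsub H x1 y1) (hsub H x2 y2)). lra.
    - intros a x h1 eps he. destruct (h1 (eps / (cmod a + 1))) as [y [hy n1]].
      { apply Rdiv_lt_0_compat; auto. pose proof (cmod_ge0 a); lra. }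
      exists (hscal a y). split; auto.
      replace (hsub H (hscal a x) (hscal a y)) with (hscal a (hsub H x y)) by veq.
      rewrite hn_scal. pose proof (cmod_ge0 a). pose proof (hn_ge0 (hsub H x y)).
      apply (Rmult_lt_compat_r (cmod a + 1)) in n1; [|lra]. unfold Rdiv in n1.
      rewrite Rmult_assoc, Rinv_l in n1 by lra. nra. }
  assert (hcl : closed_subset H Cl).
  { intros uu l hu hc eps he. rewrite conv_iff in hc. destruct (hc (eps/2)) as [n0 hn0]; [lra|].
    specialize (hn0 n0 (le_n _)). destruct (hu n0 (eps/2)) as [y [hy n1]]; [lra|].
    exists y. split; auto. pose proof (hn_tri l (uu n0) y). rewrite hn_sub_sym in hn0. lra. }
  intros x eps he.
  destruct (projection Cl hlin hcl x) as [m [hm horth]].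
  assert (hsub H x m = hzero).
  { apply dens_core. intros y hy. rewrite ip_sym, horth by (apply hsubC; auto). ceq. }
  apply sub_0_eq in H0. subst. apply hm; auto.
Qed.

Lemma fwd : (exists g, L g /\ g <> hzero) -> is_PSO H SL.
Proof.
  intros hne. split; [apply linS|split; [apply denseS|split; [apply symS|split; [apply closedS|split]]]].
  apply eq_defects; auto. apply orthS.
Qed.

End Wand.

Lemma sol s g : 0 < s < 1 -> L g -> exists p,
  hsub H p (hscal (mkC s 0) (U p)) = g /\ defect H SL (mkC 0 ((1 + s) / (1 - s))) (U p).
Proof.
  intros hs hg. set (b := (1 + s) / (1 - s)).
  assert (hb : 1 - s <> 0) by lra.
  assert (hbb : b * (1 - s) = 1 + s) by (unfold b; field; auto).
  destruct (surj b ltac:(unfold b; apply Rgt_not_eq, Rdiv_lt_0_compat; lra) (hscal (mkC (/ (1 - s)) 0) g)) as [v [hv ev]].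
  assert (eg : g = hscal (mkC (1 - s) 0) (hsub H (Ap v) (hscal (mkC 0 b) v))).
  { rewrite ev. apply veq; expand; apply Ceq_intro; csimpl; field; auto. }
  assert (hgv : L (hsub H (Ap v) (hscal (mkC 0 b) v))).
  { rewrite ev. apply HL1; auto. }
  exists (hsub H (Ap v) (hscal Ci v)). rewrite (Ucay U HU v hv). split.
  - rewrite eg. apply veq; expand; apply Ceq_intro; csimpl.
    + unfold b; field; auto.
    + unfold b; field; auto.
  - intros x hx. apply domS in hx. destruct hx as [hx hp]. specialize (hp _ hgv). rewrite appS.
    expand. expand_in hp. rewrite <- (A_sym x v hx hv) in hp |- *.
    apply Ceq_intro; pose proof (f_equal Re hp); pose proof (f_equal Im hp); csimpl; nra.
Qed.

Lemma rel_p s g p j : hsub H p (hscal (mkC s 0) (U p)) = g ->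
  Ui j p = hadd (Ui j g) (hscal (mkC s 0) (Ui (S j) p)).
Proof.
  intros e. assert (e2 : p = hadd g (hscal (mkC s 0) (U p))) by (rewrite <- e; veq).
  rewrite e2 at 1. rewrite (Ui_add U HU), (Ui_scal U HU), Nat.iter_succ_r. reflexivity.
Qed.

Section Bwd.
Hypothesis HO : forall lam nu, 0 < Im lam -> Im nu < 0 -> orth H (defect H SL lam) (defect H SL nu).

Definition Pj j := forall s g p, 0 < s < 1 -> L g -> hsub H p (hscal (mkC s 0) (U p)) = g ->
  (forall g', L g' -> ip (U p) g' = C0) -> forall g', L g' -> ip (Ui j p) g' = C0.

Lemma sol2 s g : 0 < s < 1 -> L g -> exists p,
  hsub H p (hscal (mkC s 0) (U p)) = g /\ forall g', L g' -> ip (U p) g' = C0.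
Proof.
  intros hs hg. destruct (sol s g hs hg) as [p [e hd]]. exists p. split; auto.
  intros g' hg'. apply (HO (mkC 0 ((1 + s) / (1 - s))) (Copp Ci)); auto.
  - simpl. apply Rdiv_lt_0_compat; lra.
  - simpl. lra.
  - apply def_mi; auto.
Qed.

Lemma cj j : Pj j -> forall g g', L g -> L g' -> ip (Ui j g) g' = C0.
Proof.
  intros hP g g' hg hg'. apply cmod_small_0. intros eps he.
  set (K := hnorm H g * hnorm H g' + 1).
  assert (hK : 0 < K) by (unfold K; pose proof (hn_ge0 g); pose proof (hn_ge0 g'); nra).
  set (s := Rmin (1/2) (eps / (4 * K))).
  assert (hs0 : 0 < s) by (apply Rmin_pos; [lra| apply Rdiv_lt_0_compat; lra]).
  assert (hs1 : s <= 1/2) by apply Rmin_l.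
  assert (hs2 : s <= eps / (4 * K)) by apply Rmin_r.
  destruct (sol2 s g ltac:(lra) hg) as [p [e ho]].
  pose proof (hP s g p ltac:(lra) hg e ho g' hg') as h0.
  rewrite (rel_p s g p j e) in h0. rewrite ip_addl, ip_scall in h0.
  assert (ec : ip (Ui j g) g' = Copp (Cmul (mkC s 0) (ip (Ui (S j) p) g'))).
  { apply Ceq_intro; pose proof (f_equal Re h0); pose proof (f_equal Im h0); csimpl; lra. }
  rewrite ec, cmod_opp, cmod_mul, cmod_real, Rabs_right by lra.
  pose proof (CS' (Ui (S j) p) g'). 
  assert (hnU : hnorm H (Ui (S j) p) = hnorm H p) by (unfold hnorm; f_equal; apply (Ui_N U HU)).
  rewrite hnU in H0.
  assert (hp : hnorm H p <= 2 * hnorm H g).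
  { assert (e2 : p = hadd g (hscal (mkC s 0) (U p))) by (rewrite <- e; veq).
    pose proof (hn_add g (hscal (mkC s 0) (U p))). rewrite <- e2, hn_scal, cmod_real, Rabs_right in H1 by lra.
    assert (hnorm H (U p) = hnorm H p) by (unfold hnorm; f_equal; apply (U_N U HU)).
    rewrite H2 in H1. pose proof (hn_ge0 p). pose proof (hn_ge0 g). nra. }
  pose proof (cmod_ge0 (ip (Ui (S j) p) g')). pose proof (hn_ge0 g). pose proof (hn_ge0 g'). pose proof (hn_ge0 p).
  assert (hnorm H g * hnorm H g' <= K) by (unfold K; lra).
  assert (s * K * 4 <= eps) by (apply (Rmult_le_compat_r (4 * K)) in hs2; [|lra];
     unfold Rdiv in hs2; rewrite Rmult_assoc, Rinv_l in hs2 by lra; lra).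
  assert (cmod (ip (Ui (S j) p) g') <= 2 * K).
  { eapply Rle_trans. apply H0. nra. }
  nra.
Qed.

Lemma Pstep j : Pj j -> Pj (S j).
Proof.
  intros hP s g p hs hg e ho g' hg'.
  pose proof (hP s g p hs hg e ho g' hg') as h0.
  rewrite (rel_p s g p j e), ip_addl, ip_scall, (cj j hP g g' hg hg') in h0.
  apply Ceq_intro; pose proof (f_equal Re h0) as h1; pose proof (f_equal Im h0) as h2; csimpl.
  - csimpl. nra.
  - nra.
Qed.

Lemma bwd : wandering H U L.
Proof.
  assert (hP : forall j, Pj (S j)).
  { induction j. intros s g p _ _ _ ho; apply ho. apply Pstep; auto. }
  intros n hn x y [y0 [hy0 ->]] hy. destruct n. lia. apply (cj (S n)); auto.
Qed.
End Bwd.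

End CayL.
End Main.
End OpA.
End Hil.

Theorem theorem5p2 (H : Hilbert) (A : Op H) (U : H -> H) (L : H -> Prop) :
  self_adjoint H A -> is_cayley H A U ->
  linear_subspace H L -> closed_subset H L -> (exists g, L g /\ g <> hzero H) ->
  (is_PSO H (S_L H A L) <-> wandering H U L).
Proof.
  intros hA hU hL1 hL2 hne. split.
  - intros hP. apply (bwd H (hilbert_ax H) A hA L hL1 U hU).
    destruct hP as (_&_&_&_&_&h). exact h.
  - intros hW. apply (fwd H (hilbert_ax H) A hA L hL1 hL2 U hU hW hne).
Qed.
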